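(* Let $\mathbf X$ be a totally bounded metric space and $\gamma>0$ such that $\mathcal H_\epsilon(\mathbf X)\asymp(1/\epsilon)^\gamma$ as $\epsilon\to0$. Let $\beta\in(0,1]$, $c>0$, $B>0$, and let $\mathcal F$ be the set of functions $F:\mathbf X\to\mathbb R$ with $\sup_x|F(x)|\le B$ that are Hölder continuous of order $\beta$ with coefficient $c$. There exists a strategy for Predictor such that for every $F\in\mathcal F$ there is $N_0$ such that for all $N\ge N_0$ and all moves of Reality $$\sum_{n=1}^N(y_n-\mu_n)^2\le\sum_{n=1}^N(y_n-F(x_n))^2+C_{\beta,\gamma}\,c\,\frac{N}{\log^{\beta/\gamma}N},$$ where $C_{\beta,\gamma}$ is a constant depending only on $\beta$, $\gamma$ (and on $\mathbf X$ through the implicit constants in the relation $\asymp$), but not on $c$, $F$ or $N$.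
   Context: Protocol: at each round $n$ Reality announces $x_n\in\mathbf X$, Predictor announces $\mu_n\in\mathbb R$, Reality announces $y_n\in[-1,1]$; a strategy for Predictor maps each history to $\mu_n$. $\mathcal H_\epsilon(A)$ is $\log_2$ of the minimal number of points of $A$ forming an $\epsilon$-net for $A$ (in the relevant metric). $f\asymp g$ means $f=O(g)$ and $g=O(f)$ as $\epsilon\to0$. $F$ is Hölder continuous of order $\beta$ with coefficient $c$ if $|F(x)-F(x')|\le c\,\rho(x,x')^\beta$ for all $x,x'$, $\rho$ the metric of $\mathbf X$. $\log=\log_2$. *)

(* Defs.v *)
From Stdlib Require Import Reals List.
Import ListNotations.
Open Scope R_scope.

Definition is_metric {X : Type} (rho : X -> X -> R) : Prop :=
  (forall x y, 0 <= rho x y) /\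
  (forall x y, rho x y = 0 <-> x = y) /\
  (forall x y, rho x y = rho y x) /\
  (forall x y z, rho x z <= rho x y + rho y z).

Definition is_eps_net {X : Type} (rho : X -> X -> R) (eps : R) (net : list X) : Prop :=
  forall x : X, exists y, In y net /\ rho x y <= eps.

Definition totally_bounded {X : Type} (rho : X -> X -> R) : Prop :=
  forall eps, 0 < eps -> exists net : list X, is_eps_net rho eps net.

Definition is_min_net_size {X : Type} (rho : X -> X -> R) (eps : R) (n : nat) : Prop :=
  (exists net : list X, length net = n /\ is_eps_net rho eps net) /\
  (forall net : list X, is_eps_net rho eps net -> (n <= length net)%nat).

Definition log2 (t : R) : R := ln t / ln 2.

Definition rpow (t a : R) : R := if Rle_dec t 0 then 0 else Rpower t a.

(* H_eps(X) ≍ (1/eps)^gamma as eps -> 0, where H_eps = log2 of minimal net size *)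
Definition entropy_asymp {X : Type} (rho : X -> X -> R) (gamma : R) : Prop :=
  exists a b eps0 : R, 0 < a /\ 0 < b /\ 0 < eps0 /\
    forall eps n, 0 < eps < eps0 -> is_min_net_size rho eps n ->
      a * rpow (1 / eps) gamma <= log2 (INR n) <= b * rpow (1 / eps) gamma.

Definition holder {X : Type} (rho : X -> X -> R) (beta c : R) (F : X -> R) : Prop :=
  forall x x', Rabs (F x - F x') <= c * rpow (rho x x') beta.

Fixpoint rsum (f : nat -> R) (N : nat) : R :=
  match N with
  | O => 0
  | S k => rsum f k + f (S k)
  end.

(* A Predictor strategy: from the history ((x_1,y_1),...,(x_{n-1},y_{n-1}))
   and the current x_n, output mu_n. *)
Definition strategy (X : Type) := list (X * R) -> X -> R.

Definition history {X : Type} (x : nat -> X) (y : nat -> R) (n : nat) : list (X * R) :=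
  map (fun i => (x i, y i)) (seq 1 (n - 1)).

Definition pred_move {X : Type} (S : strategy X) (x : nat -> X) (y : nat -> R) (n : nat) : R :=
  S (history x y n) (x n).

(* Main.v *)
Require Import Defs.
From Stdlib Require Import Reals List Lra Lia ClassicalEpsilon Classical Wf_nat.
Import ListNotations.
Open Scope R_scope.

Definition ep (n:nat) : nat := (Nat.log2 n / 4)%nat.

Definition upd (eta:R) (c:nat) (yv:R) (v: nat->R) : nat -> R :=
  fun k => if Nat.eqb k c then v k - 2*eta*(v k - yv) else v k.

Fixpoint st {X : Type} (cell : nat -> X -> nat) (eta : nat -> R) (x : nat -> X) (y : nat -> R) (n : nat) : nat -> R :=
  match n with
  | O => fun _ => 0
  | S m => match m with
     | O => fun _ => 0
     | S _ => if Nat.eqb (ep n) (ep m)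
              then upd (eta (ep m)) (cell (ep m) (x m)) (y m) (st cell eta x y m)
              else fun _ => 0
     end
  end.

Lemma st_S {X : Type} cell eta (x : nat -> X) y n : (1 <= n)%nat ->
  st cell eta x y (S n) = if Nat.eqb (ep (S n)) (ep n)
              then upd (eta (ep n)) (cell (ep n) (x n)) (y n) (st cell eta x y n)
              else fun _ => 0.
Proof. intros H. destruct n; [lia| reflexivity]. Qed.

Lemma st_ext {X : Type} cell eta (x x' : nat -> X) y y' n :
  (forall i, (1 <= i < n)%nat -> x i = x' i /\ y i = y' i) ->
  st cell eta x y n = st cell eta x' y' n.
Proof.
  induction n as [|n IH]; intros H; [reflexivity|].
  destruct n as [|m]; [reflexivity|].
  rewrite !(st_S _ _ _ _ (S m)) by lia.
  rewrite IH by (intros i Hi; apply H; lia).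
  destruct (H (S m)) as [H1 H2]; [lia|]. rewrite H1, H2. reflexivity.
Qed.

Lemma st_bound {X : Type} cell eta (x : nat -> X) y :
  (forall i, -1 <= y i <= 1) -> (forall i, 0 <= eta i <= 1/2) ->
  forall n k, -1 <= st cell eta x y n k <= 1.
Proof.
  intros Hy He n. induction n as [|n IH]; intros k; [simpl; lra|].
  destruct n as [|m]; [simpl; lra|].
  rewrite st_S by lia.
  destruct (Nat.eqb _ _); [|lra].
  unfold upd. destruct (Nat.eqb _ _); [|apply IH].
  specialize (IH k). specialize (Hy (S m)). specialize (He (ep (S m))).
  set (v := st cell eta x y (S m) k) in *. set (e := eta (ep (S m))) in *.
  set (w := y (S m)) in *.
  replace (v - 2*e*(v-w)) with ((1-2*e)*v + (2*e)*w) by ring.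
  split; nra.
Qed.

Definition pr {X : Type} cell eta (x : nat -> X) y n :=
  st cell eta x y n (cell (ep n) (x n)).

Definition strat {X : Type} (cell : nat -> X -> nat) (eta : nat -> R) : strategy X :=
  fun h xn => let n := S (length h) in
    pr cell eta (fun i => fst (nth (pred i) h (xn,0))) (fun i => snd (nth (pred i) h (xn,0))) n.

Lemma nth_hist {X : Type} (x : nat -> X) y n i d :
  (1 <= i < n)%nat -> nth (pred i) (history x y n) d = (x i, y i).
Proof.
  intros Hi. unfold history.
  rewrite nth_indep with (d' := (fun j => (x j, y j)) 0%nat)
    by (rewrite length_map, length_seq; lia).
  rewrite (map_nth (fun j => (x j, y j))), seq_nth by lia. f_equal; f_equal; lia.
Qed.

Lemma pred_move_eq {X : Type} cell eta (x : nat -> X) y n : (1 <= n)%nat ->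
  pred_move (strat cell eta) x y n = pr cell eta x y n.
Proof.
  intros Hn. unfold pred_move, strat.
  assert (Hl : S (length (history x y n)) = n)
    by (unfold history; rewrite length_map, length_seq; lia).
  rewrite Hl. unfold pr.
  assert (Hxn : fst (nth (pred n) (history x y n) (x n, 0)) = x n).
  { rewrite nth_overflow; [reflexivity|].
    unfold history; rewrite length_map, length_seq; lia. }
  rewrite Hxn.
  rewrite (st_ext cell eta _ x _ y n); [reflexivity|].
  intros i Hi. rewrite !nth_hist by lia. simpl. auto.
Qed.

Fixpoint psum (f : nat -> R) (K : nat) : R :=
  match K with O => 0 | S k => psum f k + f k end.

Lemma psum_upd (f g : nat -> R) c K : (c < K)%nat ->
  (forall k, k <> c -> f k = g k) ->
  psum g K = psum f K - f c + g c.
Proof.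
  induction K as [|K IH]; intros Hc H; [lia|]. simpl.
  destruct (Nat.eq_dec c K) as [->|Hne].
  - assert (psum g K = psum f K).
    { clear IH Hc. assert (forall k, (k < K)%nat -> f k = g k) by (intros; apply H; lia).
      clear H. induction K; simpl; [reflexivity|].
      rewrite IHK by (intros; apply H0; lia). rewrite H0 by lia. reflexivity. }
    lra.
  - rewrite IH; [|lia|exact H]. rewrite (H K) by lia. ring.
Qed.

Lemma psum_nonneg f K : (forall k, 0 <= f k) -> 0 <= psum f K.
Proof. intros H; induction K; simpl; [lra| specialize (H K); lra]. Qed.

Lemma psum_le f K a : (forall k, f k <= a) -> psum f K <= INR K * a.
Proof. intros H; induction K; simpl psum; [simpl; lra|]. rewrite S_INR. specialize (H K); lra. Qed.

Definition Phi K (u v : nat -> R) := psum (fun k => (v k - u k)^2) K.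

Lemma round_ineq (P w uc eta : R) :
  -1 <= P <= 1 -> -1 <= w <= 1 -> 0 < eta ->
  (w - P)^2 - (w - uc)^2 <= ((P - uc)^2 - (P - 2*eta*(P-w) - uc)^2)/(2*eta) + 8*eta.
Proof.
  intros HP Hw He.
  assert (E: ((P - uc)^2 - (P - 2*eta*(P-w) - uc)^2)/(2*eta)
     = 2*(P-w)*(P-uc) - eta * (2*(P-w))^2 / 2) by (field; lra).
  rewrite E.
  assert (-2 <= P-w <= 2) by lra.
  assert ((2*(P-w))^2 <= 16).
  { replace ((2*(P-w))^2) with (4*((P-w)*(P-w))) by ring.
    assert ((P-w)*(P-w) <= 4).
    { assert (0 <= (P-w+2)*(2-(P-w))) by (apply Rmult_le_pos; lra). nra. } lra. }
  assert (eta * (2*(P-w))^2 <= eta * 16) by (apply Rmult_le_compat_l; lra).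
  assert (0 <= (P-uc)^2) by apply pow2_ge_0.
  assert ((w - P)^2 - (w - uc)^2 = 2*(P-w)*(P-uc) - (P-uc)^2) by ring.
  lra.
Qed.

Fixpoint findc {X : Type} (rho : X -> X -> R) (e : R) (l : list X) (x : X) : nat :=
  match l with
  | [] => O
  | z :: l' => if Rle_dec (rho x z) e then O else S (findc rho e l' x)
  end.

Lemma findc_spec {X : Type} (rho : X -> X -> R) e l x d :
  (exists z, In z l /\ rho x z <= e) ->
  (findc rho e l x < length l)%nat /\ rho x (nth (findc rho e l x) l d) <= e.
Proof.
  induction l as [|z l IH]; intros [w [Hin Hw]]; [destruct Hin|].
  simpl. destruct (Rle_dec (rho x z) e) as [H|H].
  - split; [lia| exact H].
  - destruct Hin as [->|Hin]; [contradiction|].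
    destruct IH as [H1 H2]; [exists w; auto|]. split; [lia| exact H2].
Qed.

Lemma tele (r a : nat -> R) (d : R) (m N : nat) : (m <= N)%nat ->
  (forall t, (m < t <= N)%nat -> r t <= a t - a (S t) + d) ->
  rsum r N - rsum r m <= a (S m) - a (S N) + d * INR (N - m).
Proof.
  induction N as [|N IH]; intros HmN H.
  - assert (m = 0%nat) by lia. subst. simpl. lra.
  - destruct (Nat.eq_dec m (S N)) as [->|Hne].
    + rewrite Nat.sub_diag. simpl INR. lra.
    + specialize (IH ltac:(lia) ltac:(intros; apply H; lia)).
      simpl rsum. specialize (H (S N) ltac:(lia)).
      replace (S N - m)%nat with (S (N - m)) by lia. rewrite S_INR. lra.
Qed.

Definition clip (t : R) := Rmax (-1) (Rmin 1 t).

Lemma clip_bound t : -1 <= clip t <= 1.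
Proof. unfold clip, Rmax, Rmin; repeat destruct Rle_dec; lra. Qed.

Lemma clip_lip a b : Rabs (clip a - clip b) <= Rabs (a - b).
Proof. unfold clip, Rmax, Rmin; repeat destruct Rle_dec; unfold Rabs; repeat destruct Rcase_abs; lra. Qed.

Lemma clip_loss w t : -1 <= w <= 1 -> (w - clip t)^2 <= (w - t)^2.
Proof. intros. unfold clip, Rmax, Rmin; repeat destruct Rle_dec; nra. Qed.

Lemma exp_mul_pow k z : exp (INR k * z) = (exp z)^k.
Proof.
  induction k as [|k IH]; simpl pow; [simpl; rewrite Rmult_0_l; apply exp_0|].
  rewrite S_INR, Rmult_plus_distr_r, Rmult_1_l, exp_plus, IH. ring.
Qed.

Lemma exp_lb y k : 0 <= y -> (1 <= k)%nat -> (y / INR k)^k <= exp y.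
Proof.
  intros Hy Hk.
  assert (Hk' : 0 < INR k) by (apply lt_0_INR; lia).
  replace y with (INR k * (y / INR k)) at 2 by (field; lra).
  rewrite exp_mul_pow. apply pow_incr. split.
  - apply Rmult_le_pos; [lra| apply Rlt_le, Rinv_0_lt_compat; lra].
  - pose proof (exp_ineq1_le (y / INR k)).
    assert (0 <= y / INR k) by (apply Rmult_le_pos; [lra| apply Rlt_le, Rinv_0_lt_compat; lra]). lra.
Qed.

Lemma two_pow_exp J : 2^J = exp (INR J * ln 2).
Proof. rewrite exp_mul_pow, exp_ln by lra. reflexivity. Qed.

Lemma poly_exp A m : 0 < A -> exists J0 : nat, forall J : nat, (J0 <= J)%nat ->
  (32 * INR J + 200) * (4 * INR J + 4)^m <= A * 2^J.
Proof.
  intros HA.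
  set (k := S (S m)).
  set (kap := ln 2 / INR k).
  assert (Hk : 0 < INR k) by (apply lt_0_INR; unfold k; lia).
  assert (Hl2 : 0 < ln 2) by (pose proof ln_lt_2; lra).
  assert (Hkap : 0 < kap) by (unfold kap; apply Rdiv_lt_0_compat; lra).
  set (D := 200 * 4^m * 2^(S m)).
  assert (HD : 0 < D) by (unfold D; repeat apply Rmult_lt_0_compat; try lra; apply pow_lt; lra).
  destruct (INR_unbounded (D / (A * kap^k))) as [n Hn].
  exists (S n). intros J HJ.
  assert (HJ1 : 1 <= INR J) by (apply (le_INR 1); lia).
  assert (HJn : INR n <= INR J) by (apply le_INR; lia).
  assert (HJpos : 0 < INR J) by lra.
  assert (L1 : (32 * INR J + 200) * (4 * INR J + 4)^m <= D * INR J ^ (S m)).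
  { replace (4 * INR J + 4) with (4 * (INR J + 1)) by ring.
    rewrite Rpow_mult_distr.
    assert (H1 : (INR J + 1)^m <= (2 * INR J)^m) by (apply pow_incr; lra).
    rewrite Rpow_mult_distr in H1.
    assert (H2 : 32 * INR J + 200 <= 400 * INR J) by lra.
    assert (0 <= 4^m) by (apply pow_le; lra).
    assert (0 <= (INR J + 1)^m) by (apply pow_le; lra).
    assert (0 <= 2^m) by (apply pow_le; lra).
    assert (0 <= INR J^m) by (apply pow_le; lra).
    apply Rle_trans with (400 * INR J * (4^m * (2^m * INR J^m))).
    - apply Rmult_le_compat; try lra.
      + apply Rmult_le_pos; lra.
      + apply Rmult_le_compat_l; lra.
    - apply Req_le. unfold D. rewrite <- !tech_pow_Rmult. ring. }
  assert (L2 : (INR J * ln 2 / INR k)^k <= 2^J).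
  { rewrite two_pow_exp. apply exp_lb; [apply Rmult_le_pos; lra| unfold k; lia]. }
  replace (INR J * ln 2 / INR k) with (kap * INR J) in L2 by (unfold kap; field; lra).
  rewrite Rpow_mult_distr in L2.
  assert (Hpk : INR J ^ k = INR J * INR J ^ S m) by (unfold k; rewrite <- tech_pow_Rmult; reflexivity).
  rewrite Hpk in L2.
  assert (Hkk : 0 < kap^k) by (apply pow_lt; lra).
  assert (HDn : D <= A * kap^k * INR J).
  { assert (D / (A * kap^k) < INR J) by lra.
    assert (HAk: 0 < A*kap^k) by (apply Rmult_lt_0_compat; lra).
    assert (HDe : D = D/(A*kap^k)*(A*kap^k)) by (field; lra).
    rewrite HDe. apply Rle_trans with (INR J * (A*kap^k)); [apply Rmult_le_compat_r; lra| lra]. }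
  assert (0 < INR J ^ S m) by (apply pow_lt; lra).
  apply Rle_trans with (D * INR J ^ S m); [exact L1|].
  apply Rle_trans with (A * (kap^k * (INR J * INR J ^ S m))); [|apply Rmult_le_compat_l; lra].
  replace (A * (kap ^ k * (INR J * INR J ^ S m))) with ((A * kap^k * INR J) * INR J ^ S m) by ring.
  apply Rmult_le_compat_r; lra.
Qed.

Lemma Rpower_div x y z : 0 < x -> 0 < y -> Rpower (x / y) z = Rpower x z / Rpower y z.
Proof.
  intros Hx Hy. unfold Rdiv. rewrite <- Rpower_mult_distr by (try apply Rinv_0_lt_compat; lra).
  f_equal. unfold Rpower. rewrite ln_Rinv by lra.
  replace (z * - ln y) with (- (z * ln y)) by ring. apply exp_Ropp.
Qed.
Lemma div4_spec n : (4 * (n/4) <= n < 4 * (n/4) + 4)%nat.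
Proof. pose proof (Nat.div_mod n 4 ltac:(lia)). pose proof (Nat.mod_upper_bound n 4 ltac:(lia)). lia. Qed.

Lemma ep_mono a b : (a <= b)%nat -> (ep a <= ep b)%nat.
Proof. intros H. unfold ep. apply Nat.Div0.div_le_mono, Nat.log2_le_mono, H. Qed.

Lemma ep_pow i : ep (2^(4*i)) = i.
Proof. unfold ep. rewrite Nat.log2_pow2 by lia. rewrite Nat.mul_comm, Nat.div_mul; lia. Qed.

Lemma ep_bounds n : (1 <= n)%nat -> (2^(4*ep n) <= n < 2^(4*ep n + 4))%nat.
Proof.
  intros Hn. pose proof (Nat.log2_spec n ltac:(lia)) as [H1 H2].
  pose proof (div4_spec (Nat.log2 n)). unfold ep. split.
  - eapply Nat.le_trans; [|exact H1]. apply Nat.pow_le_mono_r; lia.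
  - eapply Nat.lt_le_trans; [exact H2|]. apply Nat.pow_le_mono_r; lia.
Qed.

Lemma ep_succ n : (ep (S n) <= S (ep n))%nat.
Proof.
  unfold ep. pose proof (Nat.log2_succ_le n). pose proof (div4_spec (Nat.log2 n)).
  apply Nat.Div0.div_le_upper_bound. pose proof (div4_spec (Nat.log2 (S n))). lia.
Qed.

Lemma rsum_sub f g N : rsum (fun n => f n - g n) N = rsum f N - rsum g N.
Proof. induction N; simpl; [ring| rewrite IHN; ring]. Qed.

Lemma rsum_le f a N : (forall t, (1 <= t)%nat -> f t <= a) -> rsum f N <= INR N * a.
Proof.
  intros H. induction N; simpl rsum; [simpl; lra|]. rewrite S_INR.
  specialize (H (S N) ltac:(lia)). lra.
Qed.

Lemma min_net_exists {X : Type} (rho : X -> X -> R) eps :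
  (exists net, is_eps_net rho eps net) -> exists n, is_min_net_size rho eps n.
Proof.
  intros [net Hn].
  destruct (dec_inh_nat_subset_has_unique_least_element
     (fun n => exists net, length net = n /\ is_eps_net rho eps net)) as [n [[Hn1 Hn2] _]].
  - intros n. apply classic.
  - exists (length net), net. auto.
  - exists n. split; [exact Hn1|]. intros net' H'. apply Hn2. exists net'. auto.
Qed.

Lemma net_lemma {X : Type} (rho : X -> X -> R) gamma a b eps0 i :
  totally_bounded rho -> 0 < gamma -> 0 < b ->
  (forall eps n, 0 < eps < eps0 -> is_min_net_size rho eps n ->
      a * rpow (1 / eps) gamma <= log2 (INR n) <= b * rpow (1 / eps) gamma) ->
  (1 <= i)%nat -> b / INR i < Rpower eps0 gamma -> 0 < eps0 ->
  exists net, is_eps_net rho (Rpower (b / INR i) (/ gamma)) net /\ INR (length net) <= 2^i.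
Proof.
  intros Htb Hg Hb Hent Hi Hlt He0.
  assert (Hi' : 0 < INR i) by (apply lt_0_INR; lia).
  assert (Hbi : 0 < b / INR i) by (apply Rdiv_lt_0_compat; lra).
  set (eps := Rpower (b / INR i) (/ gamma)).
  assert (Heps : 0 < eps) by (unfold eps, Rpower; apply exp_pos).
  assert (Heps0 : eps < eps0).
  { replace eps0 with (Rpower (Rpower eps0 gamma) (/gamma)).
    - apply Rlt_Rpower_l; [apply Rinv_0_lt_compat; lra| split; lra].
    - rewrite Rpower_mult, Rinv_r by lra. apply Rpower_1; lra. }
  destruct (min_net_exists rho eps (Htb eps Heps)) as [n Hmin].
  destruct (Hent eps n ltac:(lra) Hmin) as [_ Hup].
  assert (Hr : rpow (1 / eps) gamma = INR i / b).
  { unfold rpow. destruct (Rle_dec (1/eps) 0) as [H|H].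
    - exfalso. assert (0 < 1/eps) by (apply Rdiv_lt_0_compat; lra). lra.
    - unfold eps. replace (1 / Rpower (b / INR i) (/ gamma)) with (Rpower (b / INR i) (- / gamma))
        by (rewrite Rpower_Ropp; field; unfold Rpower; apply Rgt_not_eq, exp_pos).
      rewrite Rpower_mult. replace (- / gamma * gamma) with (- (1)) by (field; lra).
      rewrite Rpower_Ropp, Rpower_1 by lra. field; split; lra. }
  rewrite Hr in Hup. replace (b * (INR i / b)) with (INR i) in Hup by (field; lra).
  destruct Hmin as [[net [Hlen Hnet]] _].
  exists net. split; [exact Hnet|]. rewrite Hlen.
  destruct n as [|n]; [simpl; apply pow_le; lra|].
  assert (Hn : 0 < INR (S n)) by (apply lt_0_INR; lia).
  unfold log2 in Hup.
  assert (Hl2 : 0 < ln 2) by (pose proof ln_lt_2; lra).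
  assert (ln (INR (S n)) <= INR i * ln 2).
  { apply Rmult_le_reg_r with (/ ln 2); [apply Rinv_0_lt_compat; lra|].
    replace (INR i * ln 2 * / ln 2) with (INR i) by (field; lra). exact Hup. }
  rewrite <- (exp_ln (INR (S n))) by lra. rewrite two_pow_exp.
  destruct (Rle_lt_or_eq_dec _ _ H) as [H'|H'].
  - left. apply exp_increasing, H'.
  - rewrite H'. lra.
Qed.

Lemma rpow_mono a e be : 0 <= a <= e -> 0 < e -> 0 < be -> rpow a be <= rpow e be.
Proof.
  intros Ha He Hbe. unfold rpow.
  destruct (Rle_dec e 0); [lra|].
  destruct (Rle_dec a 0); [unfold Rpower; left; apply exp_pos|].
  apply Rle_Rpower_l; lra.
Qed.

Lemma sq_diff w a b0 : -1 <= w <= 1 -> -1 <= a <= 1 -> -1 <= b0 <= 1 ->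
  (w - a)^2 - (w - b0)^2 <= 4 * Rabs (b0 - a).
Proof.
  intros Hw Ha Hb.
  replace ((w - a)^2 - (w - b0)^2) with ((b0 - a) * (2*w - a - b0)) by ring.
  unfold Rabs; destruct (Rcase_abs (b0 - a)); nra.
Qed.

Lemma div_mono_nat (b : R) i j : 0 < b -> (1 <= j <= i)%nat -> b / INR i <= b / INR j.
Proof.
  intros Hb Hij. unfold Rdiv. apply Rmult_le_compat_l; [lra|].
  apply Rinv_le_contravar; [apply lt_0_INR; lia| apply le_INR; lia].
Qed.

Theorem corollary9 (X : Type) (rho : X -> X -> R) (gamma : R) :
  is_metric rho -> totally_bounded rho -> 0 < gamma -> entropy_asymp rho gamma ->
  forall beta : R, 0 < beta <= 1 ->
  exists C : R,
  forall c B : R, 0 < c -> 0 < B ->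
  exists S : strategy X,
  forall F : X -> R,
    (forall t, Rabs (F t) <= B) -> holder rho beta c F ->
  exists N0 : nat, forall N : nat, (N0 <= N)%nat ->
  forall (x : nat -> X) (y : nat -> R),
    (forall n, -1 <= y n <= 1) ->
    rsum (fun n => (y n - pred_move S x y n) ^ 2) N
    <= rsum (fun n => (y n - F (x n)) ^ 2) N
       + C * c * (INR N / rpow (log2 (INR N)) (beta / gamma)).
Proof.
  intros Hmet Htb Hg [a [b [eps0 [Ha [Hb [He0 Hent]]]]]] beta Hbeta.
  set (p := beta / gamma).
  assert (Hp : 0 < p) by (unfold p; apply Rdiv_lt_0_compat; lra).
  set (R32 := Rpower (32 * b) p).
  assert (HR32 : 0 < R32) by (unfold R32, Rpower; apply exp_pos).
  exists (8 * R32).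
  intros c B Hc HB.
  assert (Hpe0 : 0 < Rpower eps0 gamma) by (unfold Rpower; apply exp_pos).
  destruct (INR_unbounded (b / Rpower eps0 gamma)) as [i0' Hi0'].
  set (i0 := S i0').
  set (epsf := fun i : nat => Rpower (b / INR i) (/ gamma)).
  assert (Hnets : forall i, exists net : list X, (i0 <= i)%nat ->
     is_eps_net rho (epsf i) net /\ INR (length net) <= 2^i).
  { intros i. destruct (Compare_dec.le_dec i0 i) as [Hi|Hi].
    - assert (Hi1 : 0 < INR i) by (apply lt_0_INR; unfold i0 in Hi; lia).
      assert (Hlt : b / INR i < Rpower eps0 gamma).
      { assert (INR i0' < INR i) by (apply lt_INR; unfold i0 in Hi; lia).
        assert (b / Rpower eps0 gamma < INR i) by lra.
        apply Rmult_lt_reg_r with (INR i); [lra|].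
        replace (b / INR i * INR i) with b by (field; lra).
        apply Rmult_lt_reg_r with (/ Rpower eps0 gamma); [apply Rinv_0_lt_compat; lra|].
        replace (Rpower eps0 gamma * INR i * / Rpower eps0 gamma) with (INR i) by (field; lra).
        exact H0. }
      destruct (net_lemma rho gamma a b eps0 i Htb Hg Hb Hent ltac:(unfold i0 in Hi; lia) Hlt He0)
        as [net Hn].
      exists net; auto.
    - exists nil. intros; lia. }
  set (netf := fun i => proj1_sig (constructive_indefinite_description _ (Hnets i))).
  assert (Hnetf : forall i, (i0 <= i)%nat ->
     is_eps_net rho (epsf i) (netf i) /\ INR (length (netf i)) <= 2^i)
    by (intros i; exact (proj2_sig (constructive_indefinite_description _ (Hnets i)))).
  clearbody netf.
  set (cell := fun i x => findc rho (epsf i) (netf i) x).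
  set (eta := fun i : nat => / (2 * 4^i)).
  exists (strat cell eta).
  intros F HFB HF.
  destruct (INR_unbounded p) as [mp Hmp].
  destruct (poly_exp (4 * c * R32) mp ltac:(apply Rmult_lt_0_compat; lra)) as [J0 HJ0].
  exists (2^(4*(J0 + 2*i0 + 4)))%nat.
  intros N HN x y Hy.

  set (Jm := (J0 + 2*i0 + 4)%nat) in *.
  assert (HN1 : (1 <= N)%nat).
  { pose proof (Nat.pow_le_mono_r 2 0 (4*Jm) ltac:(lia) ltac:(lia)). rewrite Nat.pow_0_r in H. lia. }
  set (J := ep N).
  assert (HJ : (Jm <= J)%nat) by (unfold J; rewrite <- (ep_pow Jm); apply ep_mono; exact HN).
  set (i1 := (J/2)%nat).
  assert (Hi1 : (2*i1 <= J <= 2*i1+1)%nat).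
  { pose proof (Nat.div_mod J 2 ltac:(lia)). pose proof (Nat.mod_upper_bound J 2 ltac:(lia)).
    unfold i1. lia. }
  assert (Hi0i1 : (i0 <= i1 /\ 1 <= i1)%nat) by (unfold i0 in *; lia).
  set (M := (2^(4*i1))%nat).
  assert (HepM : ep M = i1) by apply ep_pow.
  assert (HM1 : (1 <= M)%nat).
  { pose proof (Nat.pow_le_mono_r 2 0 (4*i1) ltac:(lia) ltac:(lia)). rewrite Nat.pow_0_r in H. unfold M; lia. }
  assert (HMN : (M <= N)%nat).
  { pose proof (ep_bounds N HN1) as [H1 _]. fold J in H1.
    eapply Nat.le_trans; [|exact H1]. apply Nat.pow_le_mono_r; lia. }
  assert (Heta : forall i, 0 <= eta i <= 1/2).
  { intros i. unfold eta. assert (1 <= 4^i) by (apply pow_R1_Rle; lra).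
    split; [left; apply Rinv_0_lt_compat; lra|].
    rewrite <- Rinv_div. apply Rinv_le_contravar; lra. }
  assert (Heta2 : forall i z, z / (2 * eta i) = z * 4^i).
  { intros i z. unfold eta. assert (0 < 4^i) by (apply pow_lt; lra). field; lra. }
  assert (Hst : forall t k, -1 <= st cell eta x y t k <= 1) by (apply st_bound; auto).
  set (u := fun i k => clip (F (nth k (netf i) (x 0%nat)))).
  assert (Hu : forall i k, -1 <= u i k <= 1) by (intros; apply clip_bound).
  set (W := fun t => Phi (length (netf (ep t))) (u (ep t)) (st cell eta x y t) / (2 * eta (ep t))).
  set (Z := 4 * 8^(S J)).
  set (E1 := Rpower (b / INR i1) p).
  set (d := 4 / 4^i1 + 4 * c * E1).
  set (r := fun t => (y t - pred_move (strat cell eta) x y t)^2 - (y t - F (x t))^2).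
  assert (HPhi0 : forall K uu v, 0 <= Phi K uu v)
    by (intros; apply psum_nonneg; intros; apply pow2_ge_0).
  assert (HW0 : forall t, 0 <= W t).
  { intros t. unfold W. rewrite Heta2. apply Rmult_le_pos; [apply HPhi0| apply pow_le; lra]. }
  assert (HWZ : forall t, (i0 <= ep t)%nat -> (ep t <= S J)%nat -> W t <= Z).
  { intros t H1 H2. unfold W. rewrite Heta2. destruct (Hnetf (ep t) H1) as [_ HK].
    assert (HP : Phi (length (netf (ep t))) (u (ep t)) (st cell eta x y t) <= INR (length (netf (ep t))) * 4).
    { apply psum_le. intros k. specialize (Hst t k). specialize (Hu (ep t) k).
      assert (-2 <= st cell eta x y t k - u (ep t) k <= 2) by lra.
      assert (0 <= (st cell eta x y t k - u (ep t) k + 2) * (2 - (st cell eta x y t k - u (ep t) k)))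
        by (apply Rmult_le_pos; lra).
      simpl. nra. }
    assert (H4 : 0 < 4^(ep t)) by (apply pow_lt; lra).
    apply Rle_trans with (INR (length (netf (ep t))) * 4 * 4^(ep t)); [apply Rmult_le_compat_r; lra|].
    apply Rle_trans with (2^(ep t) * 4 * 4^(ep t)); [apply Rmult_le_compat_r; lra|].
    unfold Z. replace (2^(ep t) * 4 * 4^(ep t)) with (4 * 8^(ep t))
      by (replace 8 with (2*4) by lra; rewrite Rpow_mult_distr; ring).
    apply Rmult_le_compat_l; [lra|]. apply Rle_pow; [lra| exact H2]. }
  assert (Hround : forall t, (M - 1 < t <= N)%nat ->
    r t <= (W t - Z * INR (ep t)) - (W (S t) - Z * INR (ep (S t))) + d).
  { intros t Ht.
    set (i := ep t).
    assert (Hi : (i1 <= i <= J)%nat) by (split; [rewrite <- HepM; apply ep_mono; lia| apply ep_mono; lia]).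
    assert (Hi0 : (i0 <= i)%nat) by lia.
    assert (Ht1 : (1 <= t)%nat) by lia.
    destruct (Hnetf i Hi0) as [Hnet HK].
    destruct (findc_spec rho (epsf i) (netf i) (x t) (x 0%nat) (Hnet (x t))) as [Hcc Hrho].
    set (cc := findc rho (epsf i) (netf i) (x t)) in *.
    set (v := st cell eta x y t).
    set (P := v cc).
    assert (HrP : pred_move (strat cell eta) x y t = P) by (rewrite pred_move_eq by lia; reflexivity).
    set (uc := u i cc).
    set (K := length (netf i)) in *.
    set (v' := upd (eta i) cc (y t) v).
    assert (HPhi : Phi K (u i) v' = Phi K (u i) v - (P - uc)^2 + (P - 2 * eta i * (P - y t) - uc)^2).
    { unfold Phi. rewrite (psum_upd (fun k => (v k - u i k)^2) (fun k => (v' k - u i k)^2) cc K Hcc).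
      - cbv beta. unfold v', upd. rewrite Nat.eqb_refl. reflexivity.
      - intros k Hk. cbv beta. unfold v', upd. rewrite (proj2 (Nat.eqb_neq k cc) Hk). reflexivity. }
    assert (Hetapos : 0 < eta i) by (unfold eta; apply Rinv_0_lt_compat; assert (0 < 4^i) by (apply pow_lt; lra); lra).
    assert (HR := round_ineq P (y t) uc (eta i) (Hst t cc) (Hy t) Hetapos).
    assert (Hdiff : ((P - uc)^2 - (P - 2*eta i*(P - y t) - uc)^2)/(2*eta i)
        = Phi K (u i) v/(2*eta i) - Phi K (u i) v'/(2*eta i)) by (rewrite HPhi; field; lra).
    assert (HWt : W t = Phi K (u i) v / (2*eta i)) by reflexivity.
    assert (H8 : 8 * eta i <= 4 / 4^i1).
    { unfold eta. assert (0 < 4^i1) by (apply pow_lt; lra).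
      assert (4^i1 <= 4^i) by (apply Rle_pow; [lra| lia]).
      replace (8 * / (2 * 4^i)) with (4 / 4^i) by (field; lra).
      unfold Rdiv. apply Rmult_le_compat_l; [lra|]. apply Rinv_le_contravar; lra. }
    assert (Happ : (y t - uc)^2 - (y t - F (x t))^2 <= 4 * c * E1).
    { set (z := nth cc (netf i) (x 0%nat)) in *.
      assert (H1 := clip_loss (y t) (F (x t)) (Hy t)).
      assert (H2 := sq_diff (y t) uc (clip (F (x t))) (Hy t) (Hu i cc) (clip_bound _)).
      assert (H3 := clip_lip (F (x t)) (F z)).
      assert (H4 := HF (x t) z).
      assert (Hepsi : 0 < epsf i) by (unfold epsf, Rpower; apply exp_pos).
      destruct Hmet as [Hrho0 _].
      assert (H5 : rpow (rho (x t) z) beta <= rpow (epsf i) beta)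
        by (apply rpow_mono; [split; [apply Hrho0| exact Hrho]| exact Hepsi| lra]).
      assert (H6 : rpow (epsf i) beta = Rpower (b / INR i) p).
      { unfold rpow. destruct (Rle_dec (epsf i) 0); [lra|].
        unfold epsf. rewrite Rpower_mult. f_equal. unfold p. field. lra. }
      assert (H7 : Rpower (b / INR i) p <= E1).
      { unfold E1. apply Rle_Rpower_l; [lra|]. split.
        - apply Rdiv_lt_0_compat; [lra| apply lt_0_INR; lia].
        - apply div_mono_nat; [lra| lia]. }
      assert (H8' : c * rpow (rho (x t) z) beta <= c * E1)
        by (apply Rmult_le_compat_l; lra).
      assert (uc = clip (F z)) by reflexivity.
      rewrite H in H2 |- *.
      lra. }
    unfold r. rewrite HrP.
    assert (Hd : d = 4 / 4^i1 + 4 * c * E1) by reflexivity.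
    destruct (Nat.eqb (ep (S t)) i) eqn:Heq.
    - apply Nat.eqb_eq in Heq.
      assert (HstS : st cell eta x y (S t) = v').
      { rewrite st_S by lia. fold i. rewrite Heq, Nat.eqb_refl. reflexivity. }
      assert (HWS : W (S t) = Phi K (u i) v' / (2 * eta i)).
      { unfold W. rewrite HstS, Heq. reflexivity. }
      rewrite Heq. lra.
    - apply Nat.eqb_neq in Heq.
      assert (HSt : (S i <= ep (S t))%nat).
      { assert (i <= ep (S t))%nat by (apply ep_mono; lia). lia. }
      assert (HSJ : (ep (S t) <= S J)%nat).
      { apply Nat.le_trans with (ep (S N)); [apply ep_mono; lia| apply ep_succ]. }
      assert (HWS : W (S t) <= Z) by (apply HWZ; lia).
      assert (HPv' : 0 <= Phi K (u i) v' / (2 * eta i)).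
      { rewrite Heta2. apply Rmult_le_pos; [apply HPhi0| apply pow_le; lra]. }
      assert (HZ : 0 <= Z) by (unfold Z; assert (0 < 8^(S J)) by (apply pow_lt; lra); lra).
      assert (HI : INR i + 1 <= INR (ep (S t))) by (rewrite <- S_INR; apply le_INR; exact HSt).
      assert (Z * (INR i + 1) <= Z * INR (ep (S t))) by (apply Rmult_le_compat_l; lra).
      lra. }
  assert (Hearly : forall t, (1 <= t)%nat -> r t <= 4).
  { intros t Ht. unfold r. rewrite pred_move_eq by exact Ht. unfold pr.
    specialize (Hst t (cell (ep t) (x t))). specialize (Hy t).
    assert (0 <= (y t - F (x t))^2) by apply pow2_ge_0.
    set (P := st cell eta x y t (cell (ep t) (x t))) in *.
    assert (-2 <= y t - P <= 2) by lra.
    assert (0 <= (y t - P + 2) * (2 - (y t - P))) by (apply Rmult_le_pos; lra).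
    simpl. nra. }
  assert (Htele := tele r (fun t => W t - Z * INR (ep t)) d (M - 1) N ltac:(lia) Hround).
  assert (HA := rsum_le r 4 (M - 1) Hearly).
  replace (S (M - 1)) with M in Htele by lia.
  assert (HepSN : (ep (S N) <= S J)%nat) by apply ep_succ.
  assert (HWM : W M <= Z) by (apply HWZ; lia).
  assert (HW0N := HW0 (S N)).
  assert (Hd0 : 0 <= d).
  { unfold d, E1. assert (0 < 4^i1) by (apply pow_lt; lra).
    assert (0 < Rpower (b / INR i1) p) by (unfold Rpower; apply exp_pos).
    assert (0 < 4 / 4^i1) by (apply Rdiv_lt_0_compat; lra). nra. }
  assert (Hkey : rsum r N <= 4 * INR (M - 1) + Z * (INR J + 2) + d * INR N).
  { assert (HZ : 0 <= Z) by (unfold Z; assert (0 < 8^(S J)) by (apply pow_lt; lra); lra).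
    assert (INR (ep (S N)) <= INR J + 1) by (rewrite <- S_INR; apply le_INR; exact HepSN).
    assert (INR (N - (M - 1)) <= INR N) by (apply le_INR; lia).
    rewrite HepM in Htele.
    assert (0 <= INR i1) by apply pos_INR.
    assert (d * INR (N - (M - 1)) <= d * INR N) by (apply Rmult_le_compat_l; lra).
    assert (Z * INR (ep (S N)) <= Z * (INR J + 1)) by (apply Rmult_le_compat_l; lra).
    assert (0 <= Z * INR i1) by (apply Rmult_le_pos; lra).
    lra. }
  assert (Hgoal : rsum (fun n => (y n - pred_move (strat cell eta) x y n) ^ 2) N
     - rsum (fun n => (y n - F (x n)) ^ 2) N = rsum r N)
    by (unfold r; symmetry; apply (rsum_sub (fun n => (y n - pred_move (strat cell eta) x y n) ^ 2) (fun n => (y n - F (x n)) ^ 2))).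

  set (q := 2^J).
  set (s := 2^i1).
  assert (Hq1 : 1 <= q) by (apply pow_R1_Rle; lra).
  assert (Hs1 : 1 <= s) by (apply pow_R1_Rle; lra).
  assert (HNq : q^4 <= INR N < 16 * q^4).
  { pose proof (ep_bounds N HN1) as [H1 H2]. fold J in H1, H2.
    apply le_INR in H1. apply lt_INR in H2. rewrite pow_INR in H1, H2.
    replace (INR 2) with 2 in H1, H2 by (simpl; ring).
    rewrite pow_add, Nat.mul_comm, pow_mult in H2. rewrite Nat.mul_comm, pow_mult in H1.
    replace (2^4) with 16 in H2 by ring.
    unfold q. split; [exact H1|]. lra. }
  assert (HMs : INR (M - 1) <= s^4).
  { apply Rle_trans with (INR M); [apply le_INR; lia|].
    unfold M. rewrite pow_INR. replace (INR 2) with 2 by (simpl; ring). rewrite Nat.mul_comm, pow_mult. unfold s. lra. }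
  assert (Hs2q : s^2 <= q /\ q <= 2 * s^2).
  { unfold s, q. rewrite <- !pow_mult. split.
    - apply Rle_pow; [lra| lia].
    - replace (2 * 2^(i1*2)) with (2^(S (i1*2))) by reflexivity. apply Rle_pow; [lra| lia]. }
  assert (H4s : 4^i1 = s^2).
  { unfold s. replace 4 with (2*2) by lra. rewrite Rpow_mult_distr. ring. }
  assert (H8q : 8^(S J) = 8 * q^3).
  { unfold q. replace 8 with (2*2*2) by lra. rewrite <- tech_pow_Rmult, !Rpow_mult_distr. ring. }
  set (L := log2 (INR N)).
  assert (Hl2 : 0 < ln 2) by (pose proof ln_lt_2; lra).
  assert (HNgt1 : 1 < INR N).
  { assert (16 <= q^4).
    { assert (2 <= q). { unfold q. replace 2 with (2^1) at 1 by ring. apply Rle_pow; [lra| lia]. }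
      assert (4 <= q^2) by (simpl; nra). simpl in *. nra. }
    lra. }
  assert (HL0 : 0 < L).
  { unfold L, log2. apply Rdiv_lt_0_compat; [|lra]. rewrite <- ln_1. apply ln_increasing; lra. }
  assert (HLJ : L <= 4 * INR J + 4).
  { unfold L, log2. apply Rmult_le_reg_r with (ln 2); [lra|].
    replace (ln (INR N) / ln 2 * ln 2) with (ln (INR N)) by (field; lra).
    replace ((4 * INR J + 4) * ln 2) with (ln (2^(4*J+4))).
    - left. apply ln_increasing; [lra|].
      rewrite pow_add, Nat.mul_comm, pow_mult. fold q. replace (2^4) with 16 by ring. lra.
    - rewrite ln_pow by lra. rewrite plus_INR, mult_INR. simpl INR. ring. }
  set (Lp := Rpower L p).
  assert (HLp0 : 0 < Lp) by (unfold Lp, Rpower; apply exp_pos).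
  assert (Hrp : rpow L p = Lp) by (unfold rpow, Lp; destruct (Rle_dec L 0); [lra| reflexivity]).
  assert (HLp : Lp <= (4 * INR J + 4)^mp).
  { apply Rle_trans with (Rpower (4 * INR J + 4) p).
    - apply Rle_Rpower_l; lra.
    - rewrite <- Rpower_pow by (pose proof (pos_INR J); lra).
      apply Rle_Rpower; [pose proof (pos_INR J); lra| lra]. }
  assert (HE1 : E1 <= R32 / Lp).
  { unfold E1, R32, Lp. rewrite <- Rpower_div by lra.
    apply Rle_Rpower_l; [lra|]. split.
    - apply Rdiv_lt_0_compat; [lra| apply lt_0_INR; lia].
    - assert (Hi1r : 1 <= INR i1) by (apply (le_INR 1); lia).
      assert (HJi : INR J <= 2 * INR i1 + 1).
      { replace (2 * INR i1 + 1) with (INR (2*i1+1)) by (rewrite plus_INR, mult_INR; simpl; ring).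
        apply le_INR; lia. }
      assert (HL32 : L <= 32 * INR i1) by lra.
      unfold Rdiv. apply Rmult_le_reg_r with (INR i1 * L); [apply Rmult_lt_0_compat; lra|].
      replace (b * / INR i1 * (INR i1 * L)) with (b * L) by (field; lra).
      replace (32 * b * / L * (INR i1 * L)) with (b * (32 * INR i1)) by (field; lra).
      apply Rmult_le_compat_l; lra. }
  assert (HJJ0 := HJ0 J ltac:(lia)). fold q in HJJ0.
  assert (Hjunk : 4 * INR (M - 1) + Z * (INR J + 2) + 4 / 4^i1 * INR N <= q^3 * (32 * INR J + 200)).
  { unfold Z. rewrite H8q, H4s.
    destruct Hs2q as [Hs2a Hs2b].
    assert (Hs2pos : 0 < s^2) by (apply pow_lt; lra).
    assert (HsN : 4 / s^2 * INR N <= 128 * q^3).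
    { apply Rle_trans with (4 / s^2 * (16 * q^4)).
      - apply Rmult_le_compat_l; [apply Rlt_le, Rdiv_lt_0_compat; lra| lra].
      - replace (4 / s^2 * (16 * q^4)) with (64 * q^3 * (q / s^2)) by (simpl; field; lra).
        assert (q / s^2 <= 2).
        { apply Rmult_le_reg_r with (s^2); [lra|]. replace (q / s^2 * s^2) with q by (field; lra). lra. }
        assert (0 <= q^3) by (apply pow_le; lra). nra. }
    assert (Hs4 : s^4 <= q^3).
    { replace (s^4) with (s^2 * s^2) by ring. replace (q^3) with (q * q * q) by ring.
      assert (s^2 * s^2 <= q * q) by (apply Rmult_le_compat; lra). nra. }
    assert (0 <= INR J) by apply pos_INR.
    assert (0 <= q^3) by (apply pow_le; lra).
    nra. }
  assert (Hmain : q^3 * (32 * INR J + 200) <= 4 * c * R32 * INR N / Lp).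
  { apply Rmult_le_reg_r with Lp; [lra|].
    replace (4 * c * R32 * INR N / Lp * Lp) with (4 * c * R32 * INR N) by (field; lra).
    assert (0 <= q^3) by (apply pow_le; lra).
    assert (0 <= 32 * INR J + 200) by (pose proof (pos_INR J); lra).
    apply Rle_trans with (q^3 * ((32 * INR J + 200) * (4 * INR J + 4)^mp)).
    - rewrite <- Rmult_assoc. apply Rmult_le_compat_l; [apply Rmult_le_pos; lra| exact HLp].
    - apply Rle_trans with (q^3 * (4 * c * R32 * q)); [apply Rmult_le_compat_l; lra|].
      replace (q^3 * (4 * c * R32 * q)) with (4 * c * R32 * q^4) by ring.
      apply Rmult_le_compat_l; [|lra]. repeat apply Rmult_le_pos; lra. }
  assert (HE1N : 4 * c * E1 * INR N <= 4 * c * R32 * INR N / Lp).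
  { replace (4 * c * R32 * INR N / Lp) with (4 * c * INR N * (R32 / Lp)) by (field; lra).
    replace (4 * c * E1 * INR N) with (4 * c * INR N * E1) by ring.
    apply Rmult_le_compat_l; [|exact HE1]. repeat apply Rmult_le_pos; lra. }
  rewrite Hrp.
  unfold d in Hkey.
  assert (8 * R32 * c * (INR N / Lp) = 2 * (4 * c * R32 * INR N / Lp)) by (field; lra).
  lra.
Qed.
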